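(* Let $1\le l\le r$ and consider a canonical noiseless MMV model $B=AX$ in which $A$ satisfies $0\le\delta^L_{2k-r+l}(A)<1$ and the nonzero rows of $X$ are in general position. Let $I\subset\{1,\dots,n\}$ satisfy $|I|\le\min(2(k-r)+l,\,k)$ and $|I\setminus\operatorname{supp}X|\le k-r+l$. If $|I\cap\operatorname{supp}X|=k-r+q$ for some integer $q\ge0$, then $$\operatorname{rank}[A_I~B]=|I|+r-q.$$
   Context: Canonical MMV setting: $m,n,r,k$ are positive integers with $r\le m<n$ and $r\le k$. $A\in\mathbb{R}^{m\times n}$ is the sensing matrix with columns $\mathbf a_1,\dots,\mathbf a_n$; $X\in\mathbb{R}^{n\times r}$ has rows $\mathbf x^1,\dots,\mathbf x^n$, $\operatorname{supp}X=\{i:\mathbf x^i\neq 0\}$ and $|\operatorname{supp}X|=k$; $B=AX\in\mathbb{R}^{m\times r}$ has full column rank $r$. For an index set $I$, $A_I$ is the submatrix of $A$ formed by the columns indexed by $I$, and $[A_I~B]$ denotes horizontal concatenation. The lower restricted isometry constant $\delta^L_s(A)$ is the smallest $\delta\ge0$ such that $(1-\delta)\|\mathbf x\|_2^2\le\|A\mathbf x\|_2^2$ for all $\mathbf x$ with at most $s$ nonzero entries. ''The nonzero rows of $X$ are in general position'' means any $r$ of the $k$ nonzero rows of $X$ are linearly independent. *)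

(* Defs.v *)
From HB Require Import structures.
From mathcomp Require Import all_boot all_order all_algebra.
Set Implicit Arguments. Unset Strict Implicit. Unset Printing Implicit Defensive.
Import Order.TTheory GRing.Theory Num.Theory.
Local Open Scope ring_scope.

Definition rsupp (R : ringType) (n r : nat) (X : 'M[R]_(n, r)) : {set 'I_n} :=
  [set i | row i X != 0].

Definition vsupp (R : ringType) (n : nat) (x : 'cV[R]_n) : {set 'I_n} :=
  [set i | x i 0 != 0].

Definition sqnorm (R : ringType) (n : nat) (x : 'cV[R]_n) : R :=
  \sum_(i < n) x i 0 ^+ 2.

Definition lower_rip_ok (R : realFieldType) (m n : nat) (A : 'M[R]_(m, n))
    (s : nat) (delta : R) : Prop :=
  0 <= delta /\
  forall x : 'cV[R]_n, (#|vsupp x| <= s)%N ->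
    (1 - delta) * sqnorm x <= sqnorm (A *m x).

Definition is_lower_ric (R : realFieldType) (m n : nat) (A : 'M[R]_(m, n))
    (s : nat) (delta : R) : Prop :=
  lower_rip_ok A s delta /\ forall d, lower_rip_ok A s d -> delta <= d.

Definition colsub_set (R : Type) (m n : nat) (A : 'M[R]_(m, n))
    (I : {set 'I_n}) : 'M[R]_(m, #|I|) :=
  colsub (fun j : 'I_#|I| => enum_val j) A.

Definition nonzero_rows_general_position (R : fieldType) (n r : nat)
    (X : 'M[R]_(n, r)) : Prop :=
  forall f : 'I_r -> 'I_n, injective f -> (forall j, f j \in rsupp X) ->
    row_free (rowsub f X).

(* Main.v *)
Require Import Defs.
From HB Require Import structures.
From mathcomp Require Import all_boot all_order all_algebra.
Import Order.TTheory GRing.Theory Num.Theory.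
Local Open Scope ring_scope.

Lemma selK (R : nzRingType) p n (h : 'I_p -> 'I_n) : injective h ->
  rowsub h (1%:M : 'M[R]_n) *m (rowsub h 1%:M)^T = 1%:M.
Proof.
move=> hi; rewrite mul_rowsub_mx mul1mx; apply/matrixP => i j.
by rewrite !mxE (inj_eq hi) eq_sym.
Qed.

Lemma colsubE' (R : nzRingType) m n p (g : 'I_p -> 'I_n) (A : 'M[R]_(m, n)) :
  colsub g A = A *m (rowsub g 1%:M)^T.
Proof.
have -> : (rowsub g 1%:M)^T = colsub g (1%:M : 'M[R]_n).
  by apply/matrixP => i j; rewrite !mxE eq_sym.
by rewrite mulmx_colsub mulmx1.
Qed.

Lemma row_free_rowsub (R : fieldType) p r n (h : 'I_p -> 'I_r) (Y : 'M[R]_(r, n)) :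
  row_free Y -> injective h -> row_free (rowsub h Y).
Proof.
move=> /row_freeP [Z YZ] hi; apply/row_freeP.
exists (Z *m (rowsub h 1%:M)^T).
by rewrite mulmxA mul_rowsub_mx YZ selK.
Qed.

Lemma row_free_ker (R : fieldType) p n (M : 'M[R]_(p, n)) :
  (forall u : 'rV_p, u *m M = 0 -> u = 0) -> row_free M.
Proof.
move=> H; rewrite -kermx_eq0 -(submx0 (kermx M)); apply/row_subP => i.
have -> : row i (kermx M) = 0 by apply: H; apply/sub_kermxP; exact: row_sub.
by rewrite sub0mx.
Qed.

Lemma rip_zero (R : realFieldType) m n (A : 'M[R]_(m,n)) s d (T : {set 'I_n})
  (z : 'rV_n) : lower_rip_ok A s d -> d < 1 -> z *m A^T = 0 ->
  (forall i, z 0 i != 0 -> i \in T) -> (#|T| <= s)%N -> z = 0.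
Proof.
case=> _ H d1 zA zT Ts.
have sup : (#|vsupp z^T| <= s)%N.
  apply: leq_trans _ Ts; apply: subset_leq_card; apply/subsetP => i.
  by rewrite inE mxE; exact: zT.
have := H _ sup.
have -> : A *m z^T = 0 by rewrite -[A]trmxK -trmx_mul zA trmx0.
have -> : sqnorm (0 : 'cV[R]_m) = 0.
  by rewrite /sqnorm big1 // => i _; rewrite mxE expr0n.
have ge0 : 0 <= sqnorm z^T by apply: sumr_ge0 => i _; exact: sqr_ge0.
have d0 : 0 < 1 - d by rewrite subr_gt0.
rewrite pmulr_rle0 // => le0.
have eq0 : sqnorm z^T = 0 by apply/eqP; rewrite eq_le le0 ge0.
apply/rowP => i; rewrite [RHS]mxE.
have := @psumr_eq0P _ _ xpredT (fun j => z^T j 0 ^+ 2) (fun j _ => sqr_ge0 _) eq0 i isT.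
by rewrite mxE => /eqP; rewrite sqrf_eq0 => /eqP.
Qed.

From mathcomp Require Import zify.

Theorem corollary2 (R : rcfType) (m n r k l : nat)
    (A : 'M[R]_(m, n)) (X : 'M[R]_(n, r)) (I : {set 'I_n}) (q : nat) :
  (r <= m)%N -> (m < n)%N -> (r <= k)%N ->
  #|rsupp X| = k ->
  \rank (A *m X) = r ->
  (1 <= l)%N -> (l <= r)%N ->
  (exists delta : R, is_lower_ric A (2 * k - r + l)%N delta /\ 0 <= delta < 1) ->
  nonzero_rows_general_position X ->
  (#|I| <= minn (2 * (k - r) + l) k)%N ->
  (#|I :\: rsupp X| <= k - r + l)%N ->
  #|I :&: rsupp X| = (k - r + q)%N ->
  \rank (row_mx (colsub_set A I) (A *m X)) = (#|I| + r - q)%N.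
Proof.
move=> rm mn rk Sk rB l1 lr [d [[dok _] /andP[d0 d1]]] gp Icard IDS IS.
set S := rsupp X in Sk IDS IS gp *.
set B := A *m X in rB *.
set p := #|I| in Icard *.
pose ev := fun j : 'I_p => (enum_val j : 'I_n).
have evinj : injective ev by move=> a b /enum_val_inj.
have evI : forall j, ev j \in I by move=> j; exact: enum_valP.
pose sel : 'M[R]_(p, n) := rowsub ev 1%:M.
have AIE : colsub_set A I = A *m sel^T by rewrite /colsub_set colsubE'.
have pk : (p <= k)%N by apply: leq_trans Icard (geq_minr _ _).
have ISp : (#|I :&: S| <= p)%N by apply: subset_leq_card; apply: subsetIl.
have qr : (q <= r)%N by lia.
have Xrow0 : forall i, i \notin S -> forall c : 'rV_r, (c *m X^T) 0 i = 0.
  move=> i; rewrite inE negbK => /eqP Xi c; rewrite mxE big1 // => j _.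
  have : (row i X) 0 j = 0 by rewrite Xi mxE.
  by rewrite !mxE => ->; rewrite mulr0.
have selrow0 : forall (u : 'rV_p) i, i \notin I -> (u *m sel) 0 i = 0.
  move=> u i iI; rewrite mxE big1 // => j _; rewrite !mxE.
  have : ev j != i by apply: contraNneq iI => <-.
  by move/negPf ->; rewrite mulr0.
have selK' : forall z : 'rV_n, (forall i, i \notin I -> z 0 i = 0) ->
    z *m sel^T *m sel = z.
  move=> z zI; rewrite -colsubE'; apply/rowP => i; rewrite mxE.
  case: (boolP (i \in I)) => iI.
    have ej : ev (enum_rank_in iI i) = i := enum_rankK_in iI iI.
    rewrite (bigD1 (enum_rank_in iI i)) //= big1 ?addr0.
      by rewrite !mxE ej eqxx mulr1.
    move=> j jne; rewrite !mxE.
    have : ev j != i.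
      apply: contra jne => /eqP ei; apply/eqP; apply: evinj.
      by rewrite ej.
    by move/negPf ->; rewrite mulr0.
  rewrite zI // big1 // => j _; rewrite !mxE.
  have : ev j != i by apply: contraNneq iI => <-.
  by move/negPf ->; rewrite mulr0.
have s2k : (2 * k - r + l >= k)%N by lia.
have rankAI : \rank (sel *m A^T) = p.
  apply/eqP; apply: row_free_ker => u uA.
  have z0 : u *m sel = 0.
    apply: (@rip_zero _ _ _ A _ d I _ dok d1) => //; first by rewrite -mulmxA.
      by move=> i; apply: contraR => iI; rewrite selrow0.
    by lia.
  by rewrite -[u]mulmx1 -(@selK R _ _ ev evinj) mulmxA z0 mul0mx.
have rankB : \rank B^T = r by rewrite mxrank_tr.
have freeB : row_free B^T by rewrite /row_free rankB.
have n0 : (0 < n)%N by lia.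
pose i0 : 'I_n := Ordinal n0.
pose s1 := enum (S :\: I).
pose s2 := take q (enum (S :&: I)).
have s1size : size s1 = (r - q)%N.
  by rewrite /s1 -cardE cardsD setIC IS Sk; lia.
have s2size : size s2 = q.
  by apply: size_takel; rewrite -cardE setIC IS; lia.
pose s := s1 ++ s2.
have ssize : size s = r by rewrite size_cat s1size s2size; lia.
have suniq : uniq s.
  rewrite cat_uniq enum_uniq take_uniq ?enum_uniq // andbT /=.
  apply/hasPn => x /mem_take; rewrite mem_enum inE => /andP [_ xI].
  by rewrite /s1 mem_enum !inE xI.
pose f := fun j : 'I_r => nth i0 s j.
have finj : injective f.
  move=> a b /eqP; rewrite /f nth_uniq ?ssize // => /eqP; exact: val_inj.
have fS : forall j, f j \in S.
  move=> j; have : f j \in s by apply: mem_nth; rewrite ssize.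
  rewrite mem_cat => /orP [|/mem_take]; rewrite mem_enum !inE.
    by case/andP.
  by case/andP.
have freef := gp f finj fS.
have hle : (r - q <= r)%N by apply: leq_subr.
pose h := fun j : 'I_(r - q) => widen_ord hle j.
have hinj : injective h by move=> a b /(congr1 val) /= ab; exact: val_inj.
pose g := fun j => f (h j).
pose Xg := rowsub g X.
have freeg : row_free Xg.
  have -> : Xg = rowsub h (rowsub f X) by apply/matrixP => a b; rewrite !mxE.
  exact: row_free_rowsub.
have gE : forall j : 'I_(r - q), g j = nth i0 s1 j.
  by move=> j; rewrite /g /f /= nth_cat s1size ltn_ord.
have gSI : forall j, g j \in S :\: I.
  by move=> j; rewrite gE -mem_enum; apply: mem_nth; rewrite s1size.
have gsurj : forall i, i \in S :\: I -> exists j, g j = i.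
  move=> i iSI.
  have ilt : (index i s1 < r - q)%N by rewrite -s1size index_mem mem_enum.
  exists (Ordinal ilt); rewrite gE /= nth_index // mem_enum //.
have XgE : forall c : 'rV_r, c *m Xg^T = colsub g (c *m X^T).
  move=> c; rewrite -mulmx_colsub; congr (_ *m _).
  by apply/matrixP => a b; rewrite !mxE.
pose N := kermx Xg^T.
have rankN : \rank N = q.
  rewrite mxrank_ker mxrank_tr (eqP freeg); lia.
have rankNB : \rank (N *m B^T) = q by rewrite mxrankMfree.
have BE : B^T = X^T *m A^T by rewrite /B trmx_mul.
have incl1 : (N *m B^T <= sel *m A^T :&: B^T)%MS.
  rewrite sub_capmx submxMl andbT; apply/row_subP => i; rewrite row_mul.
  set c := row i N.
  have cN : c *m Xg^T = 0 by apply/sub_kermxP; exact: row_sub.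
  apply/submxP; exists (c *m X^T *m sel^T).
  rewrite BE mulmxA.
  have -> : c *m X^T *m sel^T *m (sel *m A^T) = c *m X^T *m sel^T *m sel *m A^T.
    by rewrite !mulmxA.
  rewrite selK' //.
  move=> i0' i0I; case: (boolP (i0' \in S)) => iS; last exact: Xrow0.
  have [j gj] : exists j, g j = i0' by apply: gsurj; rewrite inE iS i0I.
  have := congr1 (fun M : 'rV_(r - q) => M 0 j) cN.
  by rewrite /= XgE !mxE gj.
have incl2 : (sel *m A^T :&: B^T <= N *m B^T)%MS.
  apply/row_subP => i; set w := row i _.
  have wA : (w <= sel *m A^T)%MS := submx_trans (row_sub _ _) (capmxSl _ _).
  have wB : (w <= B^T)%MS := submx_trans (row_sub _ _) (capmxSr _ _).
  case/submxP: wA => u wu; case/submxP: wB => c wc.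
  pose z := c *m X^T - u *m sel.
  have z0 : z = 0.
    apply: (@rip_zero _ _ _ A _ d (S :|: (I :\: S)) _ dok d1).
    - by rewrite /z mulmxBl -!mulmxA -BE -wc -wu subrr.
    - move=> i1; apply: contraR => iT.
      have iS : i1 \notin S by apply: contra iT => iS; rewrite in_setU iS.
      have iI : i1 \notin I.
        by apply: contra iT => iI; rewrite in_setU in_setD iI iS orbT.
      have -> : z 0 i1 = (c *m X^T) 0 i1 - (u *m sel) 0 i1.
        by rewrite /z [LHS]mxE [X in _ + X]mxE.
      by rewrite Xrow0 // selrow0 // subrr.
    - have := cardsU S (I :\: S); lia.
  have cXu : c *m X^T = u *m sel by apply/eqP; rewrite -subr_eq0 -/z z0.
  have cN : (c <= N)%MS.
    apply/sub_kermxP; rewrite XgE cXu; apply/rowP => j; rewrite [LHS]mxE [RHS]mxE selrow0 //.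
    by have := gSI j; rewrite inE => /andP [].
  by rewrite wc submxMr.
have rankCap : \rank (sel *m A^T :&: B^T)%MS = q.
  by apply/eqP; rewrite eqn_leq -{1}rankNB mxrankS //= -rankNB mxrankS.
rewrite -mxrank_tr tr_row_mx AIE trmx_mul trmxK -addsmxE.
have := mxrank_sum_cap (sel *m A^T) B^T.
rewrite rankAI rankB rankCap => <-; rewrite addnK.
by [].
Qed.
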